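(* Assume (A), (R), (S) and let $c=(c_k)$ and $d=(d_k)$ be global solutions of (E) (with initial data in $\ell^1_1$). Then for each $\mu\ge1$, $$\frac{d}{dt}\sum_{k=1}^\infty k^\mu|c_k-d_k|\le\Bigl(2A_*(C_\mu+2)\sum_{\ell=1}^\infty\ell^{\mu+\beta}(c_\ell+d_\ell)-R_*\Bigr)\sum_{k=1}^\infty k^\mu|c_k-d_k|\quad\text{for all }t>0,$$ where $C_\mu=2^{\max\{\mu-2,0\}}\max\{\mu,\mu(\mu-1)\}$.
   Context: Throughout, $\mathbb N=\{1,2,\dots\}$. We consider the forced discrete coagulation equation $$\frac{d}{dt}c_k=\frac12\sum_{\ell=1}^{k-1}a_{k-\ell,\ell}c_{k-\ell}c_\ell-c_k\sum_{\ell=1}^{\infty}a_{k,\ell}c_\ell+s_k-r_kc_k,\qquad k\in\mathbb N,\tag{E}$$ with real coefficients satisfying the standing assumptions: (A) $a_{k,\ell}=a_{\ell,k}$ and $0\le a_{k,\ell}\le A_*(k^\alpha\ell^\beta+k^\beta\ell^\alpha)$ for all $k,\ell\in\mathbb N$, with constants $A_*>0$, $\alpha,\beta\in[0,1]$, $\alpha\le\beta$; (R) $r_k\ge R_*k^\gamma$ for all $k\in\mathbb N$, with $R_*>0$ and $\gamma>\max\{0,\alpha+\beta-1\}$; (S) $s_k\ge 0$ for all $k$, and for every $\mu\ge0$ there is $\mathfrak s_\mu>0$ with $\sum_{k\ge1}k^\mu s_k\le\mathfrak s_\mu$. For $\mu\ge0$, $\ell^1_\mu$ is the set of sequences $(c_k)_{k\in\mathbb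 N}$ with $c_k\in[0,\infty)$ and $\sum_k k^\mu c_k<\infty$. Solution: a sequence $c=(c_k)_{k\in\mathbb N}$ of continuous functions $c_k:[0,T)\to[0,\infty)$ is a solution of (E) on $[0,T)$ with initial condition $c^{\mathrm{in}}\in\ell^1_1$ if (i) for each $k$, (E) holds for all $t\in(0,T)$; (ii) for each $\mu\ge1$, $c\in L^\infty([0,T),\ell^1_1)\cap C^1((0,T),\ell^1_\mu)$; (iii) $c_k(0)=c_k^{\mathrm{in}}$ for all $k$. It is a global solution if $T=\infty$. *)

(* Defs.v *)
From Stdlib Require Import Reals Lra ClassicalEpsilon.
Open Scope R_scope.

Fixpoint sumR (n : nat) (f : nat -> R) : R :=
  match n with O => 0 | S m => sumR m f + f (S m) end.

Definition has_sum1 (u : nat -> R) (l : R) : Prop :=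
  infinite_sum (fun n => u (S n)) l.
Definition summable1 (u : nat -> R) : Prop := exists l, has_sum1 u l.
(* The value of the series (meaningful when it converges). *)
Definition Sum1 (u : nat -> R) : R :=
  epsilon (inhabits 0) (fun l => has_sum1 u l).

Definition pw (k : nat) (mu : R) : R := Rpower (INR k) mu.

Definition in_l1 (mu : R) (x : nat -> R) : Prop :=
  (forall k, (1 <= k)%nat -> 0 <= x k) /\ summable1 (fun k => pw k mu * x k).

(* the (real) Banach space containing l^1_mu, with its norm *)
Definition abs_summ (mu : R) (x : nat -> R) : Prop :=
  summable1 (fun k => pw k mu * Rabs (x k)).
Definition norm_mu (mu : R) (x : nat -> R) : R :=
  Sum1 (fun k => pw k mu * Rabs (x k)).

Definition assumption_A (a : nat -> nat -> R) (Astar alpha beta : R) : Prop :=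
  0 < Astar /\ 0 <= alpha <= 1 /\ 0 <= beta <= 1 /\ alpha <= beta /\
  forall k l, (1 <= k)%nat -> (1 <= l)%nat ->
    a k l = a l k /\
    0 <= a k l <= Astar * (pw k alpha * pw l beta + pw k beta * pw l alpha).

Definition assumption_R (r : nat -> R) (Rstar gamma alpha beta : R) : Prop :=
  0 < Rstar /\ Rmax 0 (alpha + beta - 1) < gamma /\
  forall k, (1 <= k)%nat -> Rstar * pw k gamma <= r k.

Definition assumption_S (s : nat -> R) : Prop :=
  (forall k, (1 <= k)%nat -> 0 <= s k) /\
  forall mu, 0 <= mu -> exists smu, 0 < smu /\
    forall n, sumR n (fun k => pw k mu * s k) <= smu.

Definition coag_rhs (a : nat -> nat -> R) (s r : nat -> R)
    (c : nat -> R -> R) (k : nat) (t : R) : R :=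
  / 2 * sumR (k - 1) (fun l => a (k - l)%nat l * c (k - l)%nat t * c l t)
  - c k t * Sum1 (fun l => a k l * c l t) + s k - r k * c k t.

Definition cont_nonneg (f : R -> R) : Prop :=
  forall t, 0 <= t -> forall eps, 0 < eps -> exists del, 0 < del /\
    forall t', 0 <= t' -> Rabs (t' - t) < del -> Rabs (f t' - f t) < eps.

(* t |-> (c_k(t))_k belongs to C^1((0,oo), l^1_mu) *)
Definition C1_l1 (mu : R) (c : nat -> R -> R) : Prop :=
  exists D : R -> nat -> R,
    (forall t, 0 < t -> abs_summ mu (fun k => c k t) /\ abs_summ mu (D t)) /\
    (forall t, 0 < t -> forall eps, 0 < eps -> exists del, 0 < del /\
       forall h, h <> 0 -> Rabs h < del -> 0 < t + h ->
         norm_mu mu (fun k => (c k (t + h) - c k t) / h - D t k) < eps) /\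
    (forall t, 0 < t -> forall eps, 0 < eps -> exists del, 0 < del /\
       forall t', 0 < t' -> Rabs (t' - t) < del ->
         norm_mu mu (fun k => D t' k - D t k) < eps).

Definition global_solution (a : nat -> nat -> R) (s r : nat -> R)
    (cin : nat -> R) (c : nat -> R -> R) : Prop :=
  (forall k, (1 <= k)%nat ->
     (forall t, 0 <= t -> 0 <= c k t) /\ cont_nonneg (c k)) /\
  (forall k, (1 <= k)%nat -> forall t, 0 < t ->
     derivable_pt_lim (c k) t (coag_rhs a s r c k t)) /\
  (* (ii) L^oo([0,oo), l^1_1) *)
  (exists M, forall t, 0 <= t -> forall n, sumR n (fun k => pw k 1 * c k t) <= M) /\
  (forall mu, 1 <= mu -> C1_l1 mu c) /\
  (forall k, (1 <= k)%nat -> c k 0 = cin k).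

Definition Cmu (mu : R) : R :=
  Rpower 2 (Rmax (mu - 2) 0) * Rmax mu (mu * (mu - 1)).

Definition Ndist (mu : R) (c d : nat -> R -> R) (t : R) : R :=
  Sum1 (fun k => pw k mu * Rabs (c k t - d k t)).

(* "d/dt f (t) <= b" read as: the (two-sided) upper Dini derivative of f at t is <= b *)
Definition ddt_le (f : R -> R) (t b : R) : Prop :=
  forall eps, 0 < eps -> exists del, 0 < del /\
    forall h, h <> 0 -> Rabs h < del -> 0 < t + h ->
      (f (t + h) - f t) / h <= b + eps.

(* Main.v *)
Require Import Defs.
From Stdlib Require Import Reals Lra Lia ClassicalEpsilon.
Open Scope R_scope.

Lemma sumR_ext n f g : (forall k, (1 <= k <= n)%nat -> f k = g k) -> sumR n f = sumR n g.
Proof. induction n; simpl; intros H; auto. rewrite (H (S n)) by lia. rewrite IHn; auto. intros; apply H; lia. Qed.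

Lemma sumR_plus n f g : sumR n (fun k => f k + g k) = sumR n f + sumR n g.
Proof. induction n; simpl; [lra| rewrite IHn; ring]. Qed.
Lemma sumR_minus n f g : sumR n (fun k => f k - g k) = sumR n f - sumR n g.
Proof. induction n; simpl; [lra| rewrite IHn; ring]. Qed.
Lemma sumR_scal n c f : sumR n (fun k => c * f k) = c * sumR n f.
Proof. induction n; simpl; [lra| rewrite IHn; ring]. Qed.
Lemma sumR_le n f g : (forall k, (1 <= k <= n)%nat -> f k <= g k) -> sumR n f <= sumR n g.
Proof. induction n; simpl; intros H; [lra|]. assert (H1 := H (S n)). assert (sumR n f <= sumR n g) by (apply IHn; intros; apply H; lia). assert (f (S n) <= g (S n)) by (apply H; lia). lra. Qed.
Lemma sumR_nonneg n f : (forall k, (1 <= k <= n)%nat -> 0 <= f k) -> 0 <= sumR n f.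
Proof. intros H. replace 0 with (sumR n (fun _ => 0)). apply sumR_le; auto. induction n; simpl; auto; rewrite IHn; lra || (intros; apply H; lia). Qed.
Lemma sumR_zero n : sumR n (fun _ => 0) = 0.
Proof. induction n; simpl; auto; rewrite IHn; lra. Qed.
Lemma sumR_mono m n f : (m <= n)%nat -> (forall k, (1 <= k)%nat -> 0 <= f k) -> sumR m f <= sumR n f.
Proof. intros Hmn H. induction Hmn; [lra|]. simpl. assert (0 <= f (S m0)) by (apply H; lia). lra. Qed.
Lemma sumR_abs n f : Rabs (sumR n f) <= sumR n (fun k => Rabs (f k)).
Proof. induction n; simpl. rewrite Rabs_R0; lra. eapply Rle_trans. apply Rabs_triang. lra. Qed.

Lemma sfr u n : sum_f_R0 (fun k => u (S k)) n = sumR (S n) u.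
Proof. induction n; simpl; [ring|]. rewrite IHn. simpl. ring. Qed.

Lemma hs_iff u l : has_sum1 u l <-> Un_cv (fun n => sumR n u) l.
Proof.
  unfold has_sum1, infinite_sum, Un_cv. split; intros H eps Heps; destruct (H eps Heps) as [N HN].
  - exists (S N). intros n Hn. destruct n; [lia|]. rewrite <- sfr. apply HN; lia.
  - exists N. intros n Hn. rewrite sfr. apply HN; lia.
Qed.

Lemma Sum1_spec u : summable1 u -> has_sum1 u (Sum1 u).
Proof. intros H. unfold Sum1. apply epsilon_spec. exact H. Qed.

Lemma has_sum1_unique u l1 l2 : has_sum1 u l1 -> has_sum1 u l2 -> l1 = l2.
Proof. rewrite !hs_iff. apply UL_sequence. Qed.

Lemma Sum1_eq u l : has_sum1 u l -> Sum1 u = l.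
Proof. intros H. apply (has_sum1_unique u); auto. apply Sum1_spec. exists l; auto. Qed.

Lemma has_sum1_ext u v l : (forall k, (1 <= k)%nat -> u k = v k) -> has_sum1 u l -> has_sum1 v l.
Proof. rewrite !hs_iff. intros E H eps He. destruct (H eps He) as [N HN]. exists N. intros n Hn.
  rewrite <- (sumR_ext n u v); auto. intros; apply E; lia. Qed.

Lemma has_sum1_plus u v l1 l2 : has_sum1 u l1 -> has_sum1 v l2 -> has_sum1 (fun k => u k + v k) (l1 + l2).
Proof. rewrite !hs_iff. intros H1 H2. eapply CV_plus in H2; [|exact H1].
  intros e He; destruct (H2 e He) as [N HN]; exists N; intros n Hn; rewrite sumR_plus; apply HN; auto. Qed.
Lemma has_sum1_minus u v l1 l2 : has_sum1 u l1 -> has_sum1 v l2 -> has_sum1 (fun k => u k - v k) (l1 - l2).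
Proof. rewrite !hs_iff. intros H1 H2. eapply CV_minus in H2; [|exact H1].
  intros e He; destruct (H2 e He) as [N HN]; exists N; intros n Hn; rewrite sumR_minus; apply HN; auto. Qed.
Lemma has_sum1_scal c u l : has_sum1 u l -> has_sum1 (fun k => c * u k) (c * l).
Proof. rewrite !hs_iff. intros H1. assert (Hc : Un_cv (fun _ => c) c).
  { intros e He; exists O; intros; unfold Rdist; rewrite Rminus_diag, Rabs_R0; auto. }
  eapply CV_mult in H1; [|exact Hc].
  intros e He; destruct (H1 e He) as [N HN]; exists N; intros n Hn; rewrite sumR_scal; apply HN; auto. Qed.

Lemma has_sum1_le u v l1 l2 : has_sum1 u l1 -> has_sum1 v l2 -> (forall k, (1 <= k)%nat -> u k <= v k) -> l1 <= l2.
Proof. rewrite !hs_iff. intros H1 H2 H. eapply Rle_cv_lim; [|exact H1|exact H2]. intros n; apply sumR_le; intros; apply H; lia. Qed.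

Lemma abs_split x a : Rabs x <= a -> -a <= x <= a.
Proof. unfold Rabs; destruct (Rcase_abs x); lra. Qed.

Lemma has_sum1_abs_le u v l1 l2 : has_sum1 u l1 -> has_sum1 v l2 -> (forall k, (1 <= k)%nat -> Rabs (u k) <= v k) -> Rabs l1 <= l2.
Proof. intros H1 H2 H. apply Rabs_le. split.
  - assert (H3 := has_sum1_scal (-1) v l2 H2). assert (-1 * l2 <= l1); [|lra].
    eapply has_sum1_le; eauto. intros k Hk; specialize (H k Hk). apply abs_split in H. lra.
  - eapply has_sum1_le; eauto. intros k Hk; specialize (H k Hk). apply abs_split in H. lra.
Qed.

Lemma partial_le u l n : has_sum1 u l -> (forall k, (1 <= k)%nat -> 0 <= u k) -> sumR n u <= l.
Proof. rewrite hs_iff. intros H Hp. apply (growing_ineq (fun n => sumR n u)); auto.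
  intros m; simpl. assert (0 <= u (S m)) by (apply Hp; lia). lra. Qed.

Lemma summable_nonneg_cmp u v : (forall k, (1 <= k)%nat -> 0 <= u k <= v k) -> summable1 v -> summable1 u.
Proof. intros H [l Hl]. 
  assert (Hg : Un_growing (fun n => sumR n u)). { intros m; simpl. assert (0 <= u (S m)) by (apply H; lia). lra. }
  assert (Hb : has_ub (fun n => sumR n u)).
  { exists l. intros x [i ->]. apply Rle_trans with (sumR i v). apply sumR_le; intros; apply H; lia.
    apply partial_le; auto. intros k Hk; specialize (H k Hk); lra. }
  destruct (growing_cv _ Hg Hb) as [l' Hl']. exists l'. apply hs_iff; auto. Qed.

Lemma summable_abs_cmp u v : (forall k, (1 <= k)%nat -> Rabs (u k) <= v k) -> summable1 v -> summable1 u.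
Proof. intros H Hv.
  assert (H1 : summable1 (fun k => u k + Rabs (u k))).
  { apply (summable_nonneg_cmp _ (fun k => 2 * v k)). intros k Hk; specialize (H k Hk). apply abs_split in H.
    unfold Rabs in *; destruct (Rcase_abs (u k)); lra.
    destruct Hv as [l Hl]; exists (2*l); apply has_sum1_scal; auto. }
  assert (H2 : summable1 (fun k => Rabs (u k))).
  { apply (summable_nonneg_cmp _ v); auto. intros k Hk; specialize (H k Hk); split; auto; apply Rabs_pos. }
  destruct H1 as [l1 H1], H2 as [l2 H2]. exists (l1 - l2). eapply has_sum1_ext; [|apply (has_sum1_minus _ _ _ _ H1 H2)].
  intros; simpl; ring. Qed.

Definition tailf (K : nat) (u : nat -> R) := fun k => if (k <=? K)%nat then 0 else u k.

Lemma sumR_tail K u d : sumR (K + d) (tailf K u) = sumR (K + d) u - sumR K u.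
Proof. induction d.
  - rewrite Nat.add_0_r. rewrite (sumR_ext _ _ (fun _ => 0)). rewrite sumR_zero; ring.
    intros k Hk. unfold tailf. destruct (Nat.leb_spec k K); auto; lia.
  - replace (K + S d)%nat with (S (K + d)) by lia. simpl. rewrite IHd. unfold tailf.
    destruct (Nat.leb_spec (S (K + d)) K); [lia|]. ring. Qed.

Lemma has_sum1_tail K u l : has_sum1 u l -> has_sum1 (tailf K u) (l - sumR K u).
Proof. rewrite !hs_iff. intros H e He. destruct (H e He) as [N HN]. exists (N + K)%nat. intros n Hn.
  replace n with (K + (n - K))%nat by lia. rewrite sumR_tail. unfold Rdist.
  replace (sumR (K + (n - K)) u - sumR K u - (l - sumR K u)) with (sumR (K + (n - K)) u - l) by ring.
  apply HN; lia. Qed.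

Lemma summable_Sum1_le u v : summable1 u -> summable1 v -> (forall k, (1 <= k)%nat -> u k <= v k) -> Sum1 u <= Sum1 v.
Proof. intros H1 H2 H. eapply has_sum1_le; try apply Sum1_spec; eauto. Qed.

Lemma sumR_first n f : sumR (S n) f = f 1%nat + sumR n (fun k => f (S k)).
Proof. induction n; simpl in *; [ring|]. rewrite IHn; ring. Qed.

Lemma sumR_refl n g : sumR n (fun l => g (S n - l)%nat) = sumR n g.
Proof. induction n; auto. rewrite sumR_first. simpl (S (S n) - 1)%nat.
  rewrite (sumR_ext n _ (fun k => g (S n - k)%nat)) by (intros; f_equal). rewrite IHn. simpl; ring. Qed.

Definition Tri (n : nat) (G : nat -> nat -> R) := sumR n (fun i => sumR (n - i) (fun j => G i j)).

Lemma Tri_S n G : Tri (S n) G = Tri n G + sumR n (fun i => G i (S n - i)%nat).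
Proof. unfold Tri. simpl sumR at 1. rewrite Nat.sub_diag. simpl sumR at 2.
  rewrite (sumR_ext n _ (fun i => sumR (n - i) (fun j => G i j) + G i (S n - i)%nat)).
  rewrite sumR_plus. change (sumR 0 (fun j : nat => G (S n) j)) with 0. ring.
  intros k Hk. destruct k as [|k]; [lia|]. simpl (S n - S k)%nat. replace (n - k)%nat with (S (n - S k)) by lia. reflexivity. Qed.

Lemma Tri_swap n G : Tri n G = Tri n (fun i j => G j i).
Proof. induction n; auto. rewrite !Tri_S, IHn. f_equal.
  rewrite <- (sumR_refl n (fun i => G i (S n - i)%nat)). apply sumR_ext. intros k Hk. f_equal. lia. Qed.

Lemma gain_reindex n f F : sumR n (fun k => f k * sumR (k - 1) (fun l => F (k - l)%nat l)) = Tri n (fun i j => f (i + j)%nat * F i j).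
Proof. induction n. auto. rewrite Tri_S. simpl sumR at 1. rewrite IHn. f_equal.
  try replace (S n - 1)%nat with n by lia; try rewrite Nat.sub_0_r.
  rewrite (sumR_ext n (fun i => f (i + (S n - i))%nat * F i (S n - i)%nat) (fun i => f (S n) * F i (S n - i)%nat)).
  rewrite sumR_scal. f_equal. rewrite <- (sumR_refl n (fun i => F i (S n - i)%nat)). apply sumR_ext.
  intros k Hk. f_equal. lia. intros k Hk. f_equal. f_equal. lia. Qed.

Lemma Tri_ext n G H : (forall i j, (1 <= i)%nat -> (1 <= j)%nat -> (i + j <= n)%nat -> G i j = H i j) -> Tri n G = Tri n H.
Proof. intros E. unfold Tri. apply sumR_ext. intros i Hi. apply sumR_ext. intros j Hj. apply E; lia. Qed.
Lemma Tri_le n G H : (forall i j, (1 <= i)%nat -> (1 <= j)%nat -> (i + j <= n)%nat -> G i j <= H i j) -> Tri n G <= Tri n H.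
Proof. intros E. unfold Tri. apply sumR_le. intros i Hi. apply sumR_le. intros j Hj. apply E; lia. Qed.
Lemma Tri_plus n G H : Tri n (fun i j => G i j + H i j) = Tri n G + Tri n H.
Proof. unfold Tri. rewrite <- sumR_plus. apply sumR_ext. intros; apply sumR_plus. Qed.
Lemma Tri_minus n G H : Tri n (fun i j => G i j - H i j) = Tri n G - Tri n H.
Proof. unfold Tri. rewrite <- sumR_minus. apply sumR_ext. intros; apply sumR_minus. Qed.
Lemma Tri_scal n c G : Tri n (fun i j => c * G i j) = c * Tri n G.
Proof. unfold Tri. rewrite <- sumR_scal. apply sumR_ext. intros; apply sumR_scal. Qed.

Lemma Tri_prod_le n F H : (forall k, (1 <= k)%nat -> 0 <= F k) -> (forall k, (1 <= k)%nat -> 0 <= H k) ->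
  Tri n (fun i j => F i * H j) <= sumR n F * sumR n H.
Proof. intros HF HH. unfold Tri. rewrite Rmult_comm, <- sumR_scal. apply sumR_le. intros i Hi.
  rewrite sumR_scal. rewrite (Rmult_comm (sumR n H)). apply Rmult_le_compat_l. apply HF; lia. apply sumR_mono; auto; lia. Qed.

Lemma INR_ge1 k : (1 <= k)%nat -> 1 <= INR k.
Proof. intros H. apply (le_INR 1) in H. simpl in H. lra. Qed.

Lemma pw_pos k x : 0 < pw k x.
Proof. unfold pw, Rpower. apply exp_pos. Qed.

Lemma pw_mono k x y : (1 <= k)%nat -> x <= y -> pw k x <= pw k y.
Proof. intros Hk Hxy. unfold pw. apply Rle_Rpower; auto. apply INR_ge1; auto. Qed.

Lemma pw_ge1 k x : (1 <= k)%nat -> 0 <= x -> 1 <= pw k x.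
Proof. intros Hk Hx. replace 1 with (pw k 0). apply pw_mono; auto. unfold pw. apply Rpower_O. 
  assert (H := INR_ge1 k Hk). lra. Qed.

Lemma pw_plus k x y : pw k (x + y) = pw k x * pw k y.
Proof. unfold pw. apply Rpower_plus. Qed.

Lemma pw_1 k : (1 <= k)%nat -> pw k 1 = INR k.
Proof. intros Hk. unfold pw. apply Rpower_1. assert (H := INR_ge1 k Hk). lra. Qed.

Lemma mvt_bound i j mu : (1 <= i)%nat -> (1 <= j)%nat -> 1 <= mu ->
  pw (i + j) mu - pw i mu <= mu * Rpower 2 (mu - 1) * pw i (mu - 1) * pw j mu.
Proof.
  intros Hi Hj Hmu. assert (Ii := INR_ge1 i Hi). assert (Ij := INR_ge1 j Hj).
  unfold pw. rewrite plus_INR.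
  destruct (MVT_cor2 (fun x => Rpower x mu) (fun x => mu * Rpower x (mu - 1)) (INR i) (INR i + INR j)) as [c [Hc1 Hc2]].
  lra. intros c Hc. apply derivable_pt_lim_power. lra.
  rewrite Hc1. replace (INR i + INR j - INR i) with (INR j) by ring.
  assert (E1 : Rpower c (mu - 1) <= Rpower (INR i + INR j) (mu - 1)) by (apply Rle_Rpower_l; lra).
  assert (E2 : Rpower (INR i + INR j) (mu - 1) <= Rpower (2 * (INR i * INR j)) (mu - 1)).
  { apply Rle_Rpower_l. lra. split. lra. nra. }
  rewrite <- !Rpower_mult_distr in E2 by nra.
  assert (E3 : Rpower (INR j) (mu - 1) * INR j = Rpower (INR j) mu).
  { rewrite <- (Rpower_1 (INR j)) at 2 by lra. rewrite <- Rpower_plus. f_equal. ring. }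
  assert (0 <= Rpower c (mu - 1)) by (unfold Rpower; left; apply exp_pos).
  assert (0 < Rpower 2 (mu - 1)) by (unfold Rpower; apply exp_pos).
  assert (0 < Rpower (INR i) (mu - 1)) by (unfold Rpower; apply exp_pos).
  assert (0 < Rpower (INR j) (mu - 1)) by (unfold Rpower; apply exp_pos).
  rewrite <- E3.
  assert (mu * Rpower c (mu - 1) <= mu * (Rpower 2 (mu - 1) * (Rpower (INR i) (mu - 1) * Rpower (INR j) (mu - 1)))).
  { apply Rmult_le_compat_l; lra. }
  nra.
Qed.

Lemma pw_base_mono i j mu : (1 <= i)%nat -> (i <= j)%nat -> 0 <= mu -> pw i mu <= pw j mu.
Proof. intros Hi Hij Hmu. unfold pw. apply Rle_Rpower_l; auto. assert (H := INR_ge1 i Hi). apply le_INR in Hij. lra. Qed.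

Lemma a_bound a Astar alpha beta i j : assumption_A a Astar alpha beta -> (1 <= i)%nat -> (1 <= j)%nat ->
  0 <= a i j <= 2 * Astar * pw i beta * pw j beta.
Proof. intros [HA [Hal [Hbe [Hab H]]]] Hi Hj. destruct (H i j Hi Hj) as [_ [H0 H1]]. split; auto.
  assert (pw i alpha <= pw i beta) by (apply pw_mono; auto).
  assert (pw j alpha <= pw j beta) by (apply pw_mono; auto).
  assert (X1 := pw_pos i alpha). assert (X2 := pw_pos j alpha). assert (X3 := pw_pos i beta). assert (X4 := pw_pos j beta).
  assert (pw i alpha * pw j beta <= pw i beta * pw j beta) by (apply Rmult_le_compat_r; lra).
  assert (pw i beta * pw j alpha <= pw i beta * pw j beta) by (apply Rmult_le_compat_l; lra).
  nra. Qed.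

Lemma a_psi a Astar alpha beta mu i j : assumption_A a Astar alpha beta -> 1 <= mu -> (1 <= i)%nat -> (1 <= j)%nat ->
  a i j * (pw (i + j) mu - pw i mu + pw j mu) <= 2 * Astar * (mu * Rpower 2 (mu - 1) + 1) * pw i mu * pw j (mu + beta).
Proof. intros HA Hmu Hi Hj. assert (HA' := HA). destruct HA' as [Ha [Hal [Hbe [Hab _]]]].
  destruct (a_bound _ _ _ _ i j HA Hi Hj) as [Ha0 Ha1].
  assert (Hps : pw i mu <= pw (i + j) mu) by (apply pw_base_mono; lia || lra).
  assert (Pj := pw_pos j mu).
  assert (Hm := mvt_bound i j mu Hi Hj Hmu).
  set (P := mu * Rpower 2 (mu - 1)). assert (HP : 0 < P) by (unfold P; unfold Rpower; assert (0 < exp ((mu-1) * ln 2)) by apply exp_pos; nra).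
  fold P in Hm.
  assert (E1 : pw i beta * pw i (mu - 1) <= pw i mu).
  { rewrite <- pw_plus. apply pw_mono; auto; lra. }
  assert (E2 : pw i beta <= pw i mu) by (apply pw_mono; auto; lra).
  assert (E3 : pw j mu * pw j beta = pw j (mu + beta)) by (rewrite pw_plus; ring).
  rewrite <- E3.
  assert (X1 := pw_pos i beta). assert (X2 := pw_pos j beta). assert (X3 := pw_pos i (mu-1)). assert (X4 := pw_pos i mu).
  assert (S1 : a i j * (pw (i + j) mu - pw i mu + pw j mu) <= 2 * Astar * pw i beta * pw j beta * (pw (i + j) mu - pw i mu + pw j mu))
    by (apply Rmult_le_compat_r; lra).
  assert (S2 : pw i beta * (pw (i + j) mu - pw i mu + pw j mu) <= (P + 1) * pw i mu * pw j mu).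
  { assert (pw i beta * (pw (i + j) mu - pw i mu) <= pw i beta * (P * pw i (mu - 1) * pw j mu)) by (apply Rmult_le_compat_l; lra).
    assert (pw i beta * pw j mu <= pw i mu * pw j mu) by (apply Rmult_le_compat_r; lra).
    assert (pw i beta * pw i (mu - 1) * (P * pw j mu) <= pw i mu * (P * pw j mu)) by (apply Rmult_le_compat_r; nra).
    nra. }
  assert (S3 : 2 * Astar * pw j beta * (pw i beta * (pw (i + j) mu - pw i mu + pw j mu)) <= 2 * Astar * pw j beta * ((P + 1) * pw i mu * pw j mu))
    by (apply Rmult_le_compat_l; nra).
  nra. Qed.

Lemma us_le u s p : Rabs s <= 1 -> 0 <= p -> u * (p * s) <= Rabs u * p.
Proof. intros Hs Hp. assert (H : Rabs (u * (p * s)) <= Rabs u * p).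
  { rewrite !Rabs_mult, (Rabs_pos_eq p) by auto. assert (0 <= Rabs u) by apply Rabs_pos. 
    assert (Rabs u * (p * Rabs s) <= Rabs u * (p * 1)) by (apply Rmult_le_compat_l; auto; apply Rmult_le_compat_l; auto). lra. }
  apply abs_split in H. lra. Qed.

Lemma Cmu_bound mu : 1 <= mu -> mu * Rpower 2 (mu - 1) <= 2 * Cmu mu + 1.
Proof. intros Hmu. unfold Cmu.
  assert (E : Rpower 2 (mu - 1) = 2 * Rpower 2 (mu - 2)).
  { replace (mu - 1) with (1 + (mu - 2)) by ring. rewrite Rpower_plus, Rpower_1; lra. }
  assert (E2 : Rpower 2 (mu - 2) <= Rpower 2 (Rmax (mu - 2) 0)) by (apply Rle_Rpower; [lra| apply Rmax_l]).
  assert (E3 : mu <= Rmax mu (mu * (mu - 1))) by apply Rmax_l.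
  assert (0 < Rpower 2 (mu - 2)) by (unfold Rpower; apply exp_pos).
  nra. Qed.

Lemma summable_scal c u : summable1 u -> summable1 (fun k => c * u k).
Proof. intros [l H]. exists (c * l). apply has_sum1_scal; auto. Qed.

Lemma Sum1_nonneg u : summable1 u -> (forall k, (1 <= k)%nat -> 0 <= u k) -> 0 <= Sum1 u.
Proof. intros H Hp. apply (partial_le u _ 0); auto. apply Sum1_spec; auto. Qed.

Lemma partial_le_Sum1 u n : summable1 u -> (forall k, (1 <= k)%nat -> 0 <= u k) -> sumR n u <= Sum1 u.
Proof. intros H Hp. apply partial_le; auto. apply Sum1_spec; auto. Qed.

Definition yk (a : nat -> nat -> R) (r cc dd : nat -> R) (k : nat) : R :=
  / 2 * (sumR (k - 1) (fun l => a (k - l)%nat l * cc (k - l)%nat * cc l)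
         - sumR (k - 1) (fun l => a (k - l)%nat l * dd (k - l)%nat * dd l))
  - (cc k * Sum1 (fun l => a k l * cc l) - dd k * Sum1 (fun l => a k l * dd l))
  - r k * (cc k - dd k).

Lemma tail_diff_bound a Astar alpha beta mu (cc dd : nat -> R) k m :
  assumption_A a Astar alpha beta -> 1 <= mu -> (1 <= k)%nat ->
  (forall k, (1<=k)%nat -> 0 <= cc k) -> (forall k, (1<=k)%nat -> 0 <= dd k) ->
  summable1 (fun k => pw k mu * cc k) -> summable1 (fun k => pw k mu * dd k) ->
  summable1 (fun k => pw k mu * Rabs (cc k - dd k)) ->
  summable1 (fun l => a k l * cc l) /\ summable1 (fun l => a k l * dd l) /\
  Rabs ((Sum1 (fun l => a k l * cc l) - sumR m (fun l => a k l * cc l))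
      - (Sum1 (fun l => a k l * dd l) - sumR m (fun l => a k l * dd l)))
   <= 2 * Astar * pw k beta * Sum1 (fun k => pw k mu * Rabs (cc k - dd k)).
Proof.
  intros HA Hmu Hk Hc Hd Sc Sd SN. assert (HA' := HA). destruct HA' as [Ha [Hal [Hbe [Hab _]]]].
  assert (Hab2 : forall l, (1 <= l)%nat -> 0 <= a k l <= 2 * Astar * pw k beta * pw l mu).
  { intros l Hl. destruct (a_bound _ _ _ _ k l HA Hk Hl). split; auto.
    assert (pw l beta <= pw l mu) by (apply pw_mono; auto; lra). assert (X := pw_pos k beta). assert (X2 : 0 <= 2 * Astar * pw k beta) by (apply Rmult_le_pos; lra). 
    assert (2 * Astar * pw k beta * pw l beta <= 2 * Astar * pw k beta * pw l mu) by (apply Rmult_le_compat_l; auto). lra. }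
  assert (Sac : summable1 (fun l => a k l * cc l)).
  { apply (summable_nonneg_cmp _ (fun l => (2 * Astar * pw k beta) * (pw l mu * cc l))).
    intros l Hl. destruct (Hab2 l Hl) as [Q1 Q2]. specialize (Hc l Hl). split. apply Rmult_le_pos; auto. rewrite <- Rmult_assoc. apply Rmult_le_compat_r; auto. apply summable_scal; auto. }
  assert (Sad : summable1 (fun l => a k l * dd l)).
  { apply (summable_nonneg_cmp _ (fun l => (2 * Astar * pw k beta) * (pw l mu * dd l))).
    intros l Hl. destruct (Hab2 l Hl) as [Q1 Q2]. specialize (Hd l Hl). split. apply Rmult_le_pos; auto. rewrite <- Rmult_assoc. apply Rmult_le_compat_r; auto. apply summable_scal; auto. }
  split; auto. split; auto.
  assert (H1 := has_sum1_minus _ _ _ _ (Sum1_spec _ Sac) (Sum1_spec _ Sad)).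
  assert (H2 := has_sum1_tail m _ _ H1).
  assert (H3 := has_sum1_scal (2 * Astar * pw k beta) _ _ (Sum1_spec _ SN)).
  rewrite sumR_minus in H2.
  replace ((Sum1 (fun l => a k l * cc l) - sumR m (fun l => a k l * cc l))
      - (Sum1 (fun l => a k l * dd l) - sumR m (fun l => a k l * dd l)))
   with (Sum1 (fun l => a k l * cc l) - Sum1 (fun l => a k l * dd l) - (sumR m (fun l => a k l * cc l) - sumR m (fun l => a k l * dd l))) by ring.
  eapply has_sum1_abs_le; [exact H2| exact H3|]. intros l Hl. simpl. unfold tailf.
  assert (X : 0 <= 2 * Astar * pw k beta * (pw l mu * Rabs (cc l - dd l))).
  { assert (Y := pw_pos k beta). assert (Z := pw_pos l mu). assert (W := Rabs_pos (cc l - dd l)). 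
    apply Rmult_le_pos; [nra| nra]. }
  destruct (l <=? m)%nat. rewrite Rabs_R0; auto.
  replace (a k l * cc l - a k l * dd l) with (a k l * (cc l - dd l)) by ring.
  rewrite Rabs_mult, (Rabs_pos_eq (a k l)) by (apply Hab2; auto).
  destruct (Hab2 l Hl). assert (W := Rabs_pos (cc l - dd l)).
  assert (a k l * Rabs (cc l - dd l) <= (2 * Astar * pw k beta * pw l mu) * Rabs (cc l - dd l)) by (apply Rmult_le_compat_r; auto).
  lra.
Qed.

Lemma struct_bound a r (Astar alpha beta Rstar gamma mu : R) (cc dd sg : nat -> R) n :
  assumption_A a Astar alpha beta -> assumption_R r Rstar gamma alpha beta -> 1 <= mu ->
  (forall k, (1<=k)%nat -> 0 <= cc k) -> (forall k, (1<=k)%nat -> 0 <= dd k) ->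
  summable1 (fun k => pw k mu * cc k) -> summable1 (fun k => pw k mu * dd k) ->
  summable1 (fun k => pw k (mu+beta) * (cc k + dd k)) ->
  (forall k, (1<=k)%nat -> Rabs (sg k) <= 1 /\ sg k * (cc k - dd k) = Rabs (cc k - dd k)) ->
  sumR n (fun k => pw k mu * sg k * yk a r cc dd k) <=
    Astar * (mu * Rpower 2 (mu-1) + 3) * Sum1 (fun l => pw l (mu+beta) * (cc l + dd l))
      * Sum1 (fun k => pw k mu * Rabs (cc k - dd k))
    - Rstar * sumR n (fun k => pw k mu * Rabs (cc k - dd k)).
Proof.
  intros HA HR Hmu Hc Hd Sc Sd SV Hsg.
  assert (HA' := HA). destruct HA' as [Ha [Hal [Hbe [Hab Hsym]]]].
  set (u := fun k => cc k - dd k).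
  set (N := Sum1 (fun k => pw k mu * Rabs (u k))).
  set (V := Sum1 (fun l => pw l (mu+beta) * (cc l + dd l))).
  assert (SN : summable1 (fun k => pw k mu * Rabs (u k))).
  { apply (summable_nonneg_cmp _ (fun k => pw k mu * cc k + pw k mu * dd k)).
    intros k Hk. assert (P := pw_pos k mu). specialize (Hc k Hk); specialize (Hd k Hk). split.
    apply Rmult_le_pos; [lra| apply Rabs_pos]. rewrite <- Rmult_plus_distr_l. apply Rmult_le_compat_l; [lra|].
    unfold u; unfold Rabs; destruct (Rcase_abs (cc k - dd k)); lra.
    destruct Sc as [l1 H1], Sd as [l2 H2]. exists (l1 + l2). apply has_sum1_plus; auto. }
  assert (HNn : forall m, sumR m (fun k => pw k mu * Rabs (u k)) <= N).
  { intros m. apply partial_le_Sum1; auto. intros k Hk. apply Rmult_le_pos; [left; apply pw_pos| apply Rabs_pos]. }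
  assert (HVn : forall m, sumR m (fun l => pw l (mu+beta) * (cc l + dd l)) <= V).
  { intros m. apply partial_le_Sum1; auto. intros k Hk. apply Rmult_le_pos; [left; apply pw_pos| ]. 
    specialize (Hc k Hk); specialize (Hd k Hk); lra. }
  assert (N0 : 0 <= N) by (apply Rle_trans with (sumR 0 (fun k => pw k mu * Rabs (u k))); [simpl; lra| apply HNn]).
  assert (V0 : 0 <= V) by (apply Rle_trans with (sumR 0 (fun l => pw l (mu+beta) * (cc l + dd l))); [simpl; lra| apply HVn]).
  set (T := fun i j => a i j * (cc i * cc j - dd i * dd j)).
  set (g := fun k => pw k mu * sg k).
  set (tc := fun k => Sum1 (fun l => a k l * cc l) - sumR (n - k) (fun l => a k l * cc l)).
  set (td := fun k => Sum1 (fun l => a k l * dd l) - sumR (n - k) (fun l => a k l * dd l)).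
  assert (Dec : sumR n (fun k => pw k mu * sg k * yk a r cc dd k) =
     Tri n (fun i j => / 2 * g (i + j)%nat * T i j) - Tri n (fun i j => g i * T i j)
     - sumR n (fun k => g k * (cc k * tc k - dd k * td k)) - sumR n (fun k => g k * (r k * u k))).
  { rewrite <- (gain_reindex n (fun k => /2 * g k) T).
    assert (E : Tri n (fun i j => g i * T i j) = sumR n (fun k => g k * sumR (n - k) (fun j => T k j))).
    { unfold Tri. apply sumR_ext. intros k Hk. rewrite <- sumR_scal. reflexivity. }
    rewrite E. rewrite <- sumR_minus. rewrite <- sumR_minus. rewrite <- sumR_minus. apply sumR_ext. intros k Hk. unfold yk, tc, td, g.
    assert (E2 : sumR (n - k) (fun j => T k j) = sumR (n - k) (fun l => cc k * (a k l * cc l)) - sumR (n - k) (fun l => dd k * (a k l * dd l))).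
    { rewrite <- sumR_minus. apply sumR_ext. intros; unfold T; ring. }
    rewrite E2.
    assert (E3 : sumR (k - 1) (fun l => T (k - l)%nat l) = sumR (k - 1) (fun l => a (k - l)%nat l * cc (k - l)%nat * cc l) - sumR (k - 1) (fun l => a (k - l)%nat l * dd (k - l)%nat * dd l)).
    { rewrite <- sumR_minus. apply sumR_ext. intros; unfold T; ring. }
    rewrite E3, !sumR_scal. unfold u. ring. }
  set (P := mu * Rpower 2 (mu - 1)).
  set (K := 2 * Astar * (P + 1)).
  assert (HP : 0 < P) by (unfold P, Rpower; assert (0 < exp ((mu-1) * ln 2)) by apply exp_pos; nra).
  assert (HK : 0 < K) by (unfold K; nra).
  assert (L2 : Tri n (fun i j => g i * T i j) = Tri n (fun i j => g j * T i j)).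
  { rewrite Tri_swap. apply Tri_ext. intros i j Hi Hj _. unfold T. rewrite (proj1 (Hsym j i Hj Hi)). ring. }
  assert (G1 : Tri n (fun i j => / 2 * g (i + j)%nat * T i j) - Tri n (fun i j => g i * T i j) =
     Tri n (fun i j => / 2 * g (i + j)%nat * T i j - / 2 * (g i * T i j) - / 2 * (g j * T i j))).
  { rewrite (Tri_minus n (fun i j => / 2 * g (i + j)%nat * T i j - / 2 * (g i * T i j)) (fun i j => / 2 * (g j * T i j))).
    rewrite (Tri_minus n (fun i j => / 2 * g (i + j)%nat * T i j) (fun i j => / 2 * (g i * T i j))).
    rewrite (Tri_scal n (/2) (fun i j => g i * T i j)), (Tri_scal n (/2) (fun i j => g j * T i j)).
    rewrite <- L2. lra. }
  assert (B1 : forall i j, (1<=i)%nat -> (1<=j)%nat -> (i+j<=n)%nat ->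
     / 2 * g (i + j)%nat * T i j - / 2 * (g i * T i j) - / 2 * (g j * T i j) <=
     / 2 * K * ((pw i mu * Rabs (u i)) * (pw j (mu + beta) * cc j)) + / 2 * K * ((pw i (mu + beta) * dd i) * (pw j mu * Rabs (u j)))).
  { intros i j Hi Hj _. assert (Hij : (1 <= i + j)%nat) by lia.
    destruct (Hsg i Hi) as [si1 si2]. destruct (Hsg j Hj) as [sj1 sj2]. destruct (Hsg (i+j)%nat Hij) as [sij1 _].
    unfold g, T, u.
    assert (Pij := pw_pos (i+j) mu). assert (Pi := pw_pos i mu). assert (Pj := pw_pos j mu).
    assert (Rs : forall x, Rabs x <= 1 -> Rabs (- x) <= 1) by (intros x Hx; rewrite Rabs_Ropp; auto).
    assert (F1 := us_le (cc i - dd i) (sg (i+j)%nat) (pw (i+j) mu) sij1 (Rlt_le _ _ Pij)).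
    assert (F3 := us_le (cc i - dd i) (- sg j) (pw j mu) (Rs _ sj1) (Rlt_le _ _ Pj)).
    assert (F4 := us_le (cc j - dd j) (sg (i+j)%nat) (pw (i+j) mu) sij1 (Rlt_le _ _ Pij)).
    assert (F5 := us_le (cc j - dd j) (- sg i) (pw i mu) (Rs _ si1) (Rlt_le _ _ Pi)).
    assert (PhiI : (cc i - dd i) * (pw (i + j) mu * sg (i + j)%nat - pw i mu * sg i - pw j mu * sg j)
                 <= Rabs (cc i - dd i) * (pw (i + j) mu - pw i mu + pw j mu)).
    { replace ((cc i - dd i) * (pw (i + j) mu * sg (i + j)%nat - pw i mu * sg i - pw j mu * sg j))
        with ((cc i - dd i) * (pw (i + j) mu * sg (i + j)%nat) - pw i mu * (sg i * (cc i - dd i)) + (cc i - dd i) * (pw j mu * - sg j)) by ring.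
      rewrite si2. lra. }
    assert (PhiJ : (cc j - dd j) * (pw (i + j) mu * sg (i + j)%nat - pw i mu * sg i - pw j mu * sg j)
                 <= Rabs (cc j - dd j) * (pw (j + i) mu - pw j mu + pw i mu)).
    { replace ((cc j - dd j) * (pw (i + j) mu * sg (i + j)%nat - pw i mu * sg i - pw j mu * sg j))
        with ((cc j - dd j) * (pw (i + j) mu * sg (i + j)%nat) - pw j mu * (sg j * (cc j - dd j)) + (cc j - dd j) * (pw i mu * - sg i)) by ring.
      rewrite sj2. rewrite (Nat.add_comm j i). lra. }
    assert (A1 := a_psi a Astar alpha beta mu i j HA Hmu Hi Hj).
    assert (A2 := a_psi a Astar alpha beta mu j i HA Hmu Hj Hi).
    rewrite (proj1 (Hsym j i Hj Hi)) in A2. fold P in A1, A2. fold K in A1, A2.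
    destruct (a_bound _ _ _ _ i j HA Hi Hj) as [a0 _].
    specialize (Hc i Hi) as ci0. specialize (Hc j Hj) as cj0. specialize (Hd i Hi) as di0. specialize (Hd j Hj) as dj0.
    assert (ui0 := Rabs_pos (cc i - dd i)). assert (uj0 := Rabs_pos (cc j - dd j)).
    assert (M1 : a i j * cc j * ((cc i - dd i) * (pw (i + j) mu * sg (i + j)%nat - pw i mu * sg i - pw j mu * sg j))
              <= a i j * cc j * (Rabs (cc i - dd i) * (pw (i + j) mu - pw i mu + pw j mu))) by (apply Rmult_le_compat_l; [nra| exact PhiI]).
    assert (M2 : a i j * dd i * ((cc j - dd j) * (pw (i + j) mu * sg (i + j)%nat - pw i mu * sg i - pw j mu * sg j))
              <= a i j * dd i * (Rabs (cc j - dd j) * (pw (j + i) mu - pw j mu + pw i mu))) by (apply Rmult_le_compat_l; [nra| exact PhiJ]).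
    assert (M3 : cc j * Rabs (cc i - dd i) * (a i j * (pw (i + j) mu - pw i mu + pw j mu)) <= cc j * Rabs (cc i - dd i) * (K * pw i mu * pw j (mu + beta)))
      by (apply Rmult_le_compat_l; [nra| exact A1]).
    assert (M4 : dd i * Rabs (cc j - dd j) * (a i j * (pw (j + i) mu - pw j mu + pw i mu)) <= dd i * Rabs (cc j - dd j) * (K * pw j mu * pw i (mu + beta)))
      by (apply Rmult_le_compat_l; [nra| exact A2]).
    replace (/ 2 * (pw (i + j) mu * sg (i + j)%nat) * (a i j * (cc i * cc j - dd i * dd j)) -
       / 2 * (pw i mu * sg i * (a i j * (cc i * cc j - dd i * dd j))) -
       / 2 * (pw j mu * sg j * (a i j * (cc i * cc j - dd i * dd j))))
     with (/ 2 * (a i j * cc j * ((cc i - dd i) * (pw (i + j) mu * sg (i + j)%nat - pw i mu * sg i - pw j mu * sg j))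
            + a i j * dd i * ((cc j - dd j) * (pw (i + j) mu * sg (i + j)%nat - pw i mu * sg i - pw j mu * sg j)))) by ring.
    nra. }
  assert (T1 : Tri n (fun i j => / 2 * g (i + j)%nat * T i j) - Tri n (fun i j => g i * T i j) <= / 2 * K * (N * V)).
  { rewrite G1. eapply Rle_trans. apply Tri_le. exact B1.
    rewrite (Tri_plus n (fun i j => / 2 * K * (pw i mu * Rabs (u i) * (pw j (mu + beta) * cc j))) (fun i j => / 2 * K * (pw i (mu + beta) * dd i * (pw j mu * Rabs (u j))))).
    rewrite (Tri_scal n (/2 * K) (fun i j => (pw i mu * Rabs (u i) * (pw j (mu + beta) * cc j)))).
    rewrite (Tri_scal n (/2 * K) (fun i j => (pw i (mu + beta) * dd i * (pw j mu * Rabs (u j))))).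
    assert (Q1 := Tri_prod_le n (fun i => pw i mu * Rabs (u i)) (fun j => pw j (mu + beta) * cc j)).
    assert (Q2 := Tri_prod_le n (fun i => pw i (mu + beta) * dd i) (fun j => pw j mu * Rabs (u j))).
    simpl in Q1, Q2.
    assert (NN : forall k, (1 <= k)%nat -> 0 <= pw k mu * Rabs (u k)) by (intros k Hk; apply Rmult_le_pos; [left; apply pw_pos| apply Rabs_pos]).
    assert (CC : forall k, (1 <= k)%nat -> 0 <= pw k (mu+beta) * cc k) by (intros k Hk; apply Rmult_le_pos; [left; apply pw_pos| auto]).
    assert (DD : forall k, (1 <= k)%nat -> 0 <= pw k (mu+beta) * dd k) by (intros k Hk; apply Rmult_le_pos; [left; apply pw_pos| auto]).
    specialize (Q1 NN CC). specialize (Q2 DD NN).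
    assert (Vs : sumR n (fun j => pw j (mu + beta) * cc j) + sumR n (fun j => pw j (mu + beta) * dd j) <= V).
    { rewrite <- sumR_plus. eapply Rle_trans; [|apply (HVn n)]. right. apply sumR_ext. intros; ring. }
    assert (X1 := HNn n). assert (X2 := sumR_nonneg n _ (fun k H => NN k (proj1 H))).
    assert (X3 := sumR_nonneg n _ (fun k H => CC k (proj1 H))). assert (X4 := sumR_nonneg n _ (fun k H => DD k (proj1 H))).
    assert (sumR n (fun k => pw k mu * Rabs (u k)) * (sumR n (fun j => pw j (mu + beta) * cc j) + sumR n (fun j => pw j (mu + beta) * dd j)) <= N * V).
    { apply Rmult_le_compat; auto; lra. }
    assert (HK2 : 0 <= / 2 * K) by lra.
    assert (/ 2 * K * Tri n (fun i j => pw i mu * Rabs (u i) * (pw j (mu + beta) * cc j)) + / 2 * K * Tri n (fun i j => pw i (mu + beta) * dd i * (pw j mu * Rabs (u j)))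
      <= / 2 * K * (sumR n (fun k => pw k mu * Rabs (u k)) * (sumR n (fun j => pw j (mu + beta) * cc j) + sumR n (fun j => pw j (mu + beta) * dd j)))).
    { rewrite <- Rmult_plus_distr_l. apply Rmult_le_compat_l; auto. nra. }
    assert (/ 2 * K * (sumR n (fun k => pw k mu * Rabs (u k)) * (sumR n (fun j => pw j (mu + beta) * cc j) + sumR n (fun j => pw j (mu + beta) * dd j))) <= / 2 * K * (N * V))
      by (apply Rmult_le_compat_l; auto).
    lra. }
  assert (T2 : - sumR n (fun k => g k * (cc k * tc k - dd k * td k)) <= 2 * Astar * N * V).
  { assert (E : - sumR n (fun k => g k * (cc k * tc k - dd k * td k)) = sumR n (fun k => - (g k * (cc k * tc k - dd k * td k)))).
    { replace (- sumR n (fun k => g k * (cc k * tc k - dd k * td k))) with (-1 * sumR n (fun k => g k * (cc k * tc k - dd k * td k))) by ring.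
      rewrite <- sumR_scal. apply sumR_ext; intros; ring. }
    rewrite E. eapply Rle_trans.
    - apply (sumR_le n _ (fun k => (2 * Astar * N) * (pw k (mu + beta) * (cc k + dd k)))).
      intros k [Hk _]. 
      destruct (tail_diff_bound a Astar alpha beta mu cc dd k (n - k) HA Hmu Hk Hc Hd Sc Sd SN) as [Sac [Sad Hb]].
      fold N in Hb.
      assert (tc0 : 0 <= tc k).
      { unfold tc. assert (sumR (n - k) (fun l => a k l * cc l) <= Sum1 (fun l => a k l * cc l)); [|lra].
        apply partial_le_Sum1; auto. intros l Hl. destruct (a_bound _ _ _ _ k l HA Hk Hl). specialize (Hc l Hl). nra. }
      destruct (Hsg k Hk) as [s1 s2]. unfold g.
      assert (Pk := pw_pos k mu). assert (Pb := pw_pos k beta). specialize (Hc k Hk) as ck. specialize (Hd k Hk) as dk.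
      replace (- (pw k mu * sg k * (cc k * tc k - dd k * td k))) with
        (- pw k mu * tc k * (sg k * (cc k - dd k)) + dd k * ((tc k - td k) * (pw k mu * - sg k))) by ring.
      rewrite s2.
      assert (F := us_le (tc k - td k) (- sg k) (pw k mu) ltac:(rewrite Rabs_Ropp; auto) (Rlt_le _ _ Pk)).
      assert (G := Rabs_pos (cc k - dd k)).
      assert (dd k * ((tc k - td k) * (pw k mu * - sg k)) <= dd k * (Rabs (tc k - td k) * pw k mu)) by (apply Rmult_le_compat_l; auto).
      assert (dd k * (Rabs (tc k - td k) * pw k mu) <= dd k * (2 * Astar * pw k beta * N * pw k mu)).
      { apply Rmult_le_compat_l; auto. apply Rmult_le_compat_r; [lra|]. unfold tc, td. exact Hb. }
      assert (0 <= pw k mu * tc k * Rabs (cc k - dd k)) by (apply Rmult_le_pos; [apply Rmult_le_pos|]; lra).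
      rewrite pw_plus.
      assert (0 <= 2 * Astar * N * (pw k mu * pw k beta) * cc k) by (apply Rmult_le_pos; [apply Rmult_le_pos|]; [nra| nra| lra]).
      nra.
    - rewrite sumR_scal. assert (0 <= 2 * Astar * N) by nra. assert (X := HVn n).
      apply Rle_trans with (2 * Astar * N * V). apply Rmult_le_compat_l; auto. right; ring. }
  assert (T3 : Rstar * sumR n (fun k => pw k mu * Rabs (cc k - dd k)) <= sumR n (fun k => g k * (r k * u k))).
  { rewrite <- sumR_scal. apply sumR_le. intros k [Hk _]. destruct HR as [HR0 [Hg HR1]].
    destruct (Hsg k Hk) as [_ s2]. unfold g, u.
    replace (pw k mu * sg k * (r k * (cc k - dd k))) with (pw k mu * r k * (sg k * (cc k - dd k))) by ring. rewrite s2.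
    assert (1 <= pw k gamma) by (apply pw_ge1; auto; assert (X := Rmax_l 0 (alpha + beta - 1)); lra).
    specialize (HR1 k Hk). assert (Pk := pw_pos k mu). assert (G := Rabs_pos (cc k - dd k)).
    assert (Rstar <= r k) by nra. 
    assert (Rstar * (pw k mu * Rabs (cc k - dd k)) <= r k * (pw k mu * Rabs (cc k - dd k))) by (apply Rmult_le_compat_r; [nra| auto]).
    nra. }
  rewrite Dec. fold N V. unfold u in T1, T2.
  change (Sum1 (fun k => pw k mu * Rabs (cc k - dd k))) with N.
  assert (E : Astar * (P + 3) * V * N = / 2 * K * (N * V) + 2 * Astar * N * V) by (unfold K; field).
  rewrite E. lra.
Qed.

Lemma summable_ext u v : (forall k, (1 <= k)%nat -> u k = v k) -> summable1 u -> summable1 v.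
Proof. intros E [l H]. exists l. eapply has_sum1_ext; eauto. Qed.

Lemma abs_summ_lin mu x y al be : abs_summ mu x -> abs_summ mu y -> abs_summ mu (fun k => al * x k + be * y k).
Proof. unfold abs_summ. intros Hx Hy.
  apply (summable_nonneg_cmp _ (fun k => Rabs al * (pw k mu * Rabs (x k)) + Rabs be * (pw k mu * Rabs (y k)))).
  intros k Hk. assert (P := pw_pos k mu). split. apply Rmult_le_pos; [lra| apply Rabs_pos].
  eapply Rle_trans. apply Rmult_le_compat_l. lra. apply Rabs_triang. rewrite !Rabs_mult. right; ring.
  destruct (summable_scal (Rabs al) _ Hx) as [l1 H1], (summable_scal (Rabs be) _ Hy) as [l2 H2].
  exists (l1 + l2). apply has_sum1_plus; auto. Qed.

Lemma abs_summ_ext mu x y : (forall k, (1 <= k)%nat -> x k = y k) -> abs_summ mu x -> abs_summ mu y.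
Proof. unfold abs_summ. intros E. apply summable_ext. intros k Hk. rewrite E; auto. Qed.

Lemma term_le_Sum1 u k : summable1 u -> (forall k, (1 <= k)%nat -> 0 <= u k) -> (1 <= k)%nat -> u k <= Sum1 u.
Proof. intros H Hp Hk. eapply Rle_trans; [|apply (partial_le_Sum1 u k H Hp)].
  destruct k; [lia|]. simpl. assert (0 <= sumR k u) by (apply sumR_nonneg; intros; apply Hp; lia). lra. Qed.

Lemma quot_summ mu (c : nat -> R -> R) (D : nat -> R) t h : h <> 0 ->
  abs_summ mu (fun k => c k (t + h)) -> abs_summ mu (fun k => c k t) -> abs_summ mu D ->
  abs_summ mu (fun k => (c k (t + h) - c k t) / h - D k).
Proof. intros Hh H1 H2 H3.
  assert (H4 := abs_summ_lin mu _ _ (/h) (- / h) H1 H2).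
  assert (H5 := abs_summ_lin mu _ _ 1 (-1) H4 H3).
  eapply abs_summ_ext; [|exact H5]. intros k Hk. simpl. field. auto. Qed.

Lemma ident_D a s r (c : nat -> R -> R) mu (D : R -> nat -> R) t :
  0 < t ->
  (forall k, (1 <= k)%nat -> forall t, 0 < t -> derivable_pt_lim (c k) t (coag_rhs a s r c k t)) ->
  (forall t, 0 < t -> abs_summ mu (fun k => c k t) /\ abs_summ mu (D t)) ->
  (forall t, 0 < t -> forall eps, 0 < eps -> exists del, 0 < del /\
       forall h, h <> 0 -> Rabs h < del -> 0 < t + h ->
         norm_mu mu (fun k => (c k (t + h) - c k t) / h - D t k) < eps) ->
  forall k, (1 <= k)%nat -> D t k = coag_rhs a s r c k t.
Proof.
  intros Ht Hder Hs Hq k Hk.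
  destruct (Req_dec (D t k) (coag_rhs a s r c k t)) as [E|NE]; auto. exfalso.
  set (e := Rabs (D t k - coag_rhs a s r c k t)).
  assert (He : 0 < e) by (apply Rabs_pos_lt; lra).
  assert (Pk := pw_pos k mu).
  destruct (Hder k Hk t Ht (e/2) ltac:(lra)) as [d1 Hd1].
  destruct (Hq t Ht (pw k mu * (e/2)) ltac:(nra)) as [d2 [Hd2 Hq2]].
  set (h := Rmin (Rmin d1 d2) t / 2).
  assert (Hd1p := cond_pos d1).
  assert (h0 : 0 < h) by (unfold h; assert (0 < Rmin (Rmin d1 d2) t) by (repeat apply Rmin_glb_lt; lra); lra).
  assert (h1 : h < d1) by (unfold h; assert (X := Rmin_l (Rmin d1 d2) t); assert (Y := Rmin_l d1 d2); lra).
  assert (h2 : h < d2) by (unfold h; assert (X := Rmin_l (Rmin d1 d2) t); assert (Y := Rmin_r d1 d2); lra).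
  assert (h3 : h < t) by (unfold h; assert (X := Rmin_r (Rmin d1 d2) t); lra).
  assert (A1 := Hd1 h ltac:(lra) ltac:(rewrite Rabs_pos_eq; lra)).
  assert (A2 := Hq2 h ltac:(lra) ltac:(rewrite Rabs_pos_eq; lra) ltac:(lra)).
  destruct (Hs (t + h) ltac:(lra)) as [S1 _]. destruct (Hs t Ht) as [S2 S3].
  assert (Sm := quot_summ mu c (D t) t h ltac:(lra) S1 S2 S3).
  assert (T := term_le_Sum1 _ k Sm ltac:(intros; apply Rmult_le_pos; [left; apply pw_pos| apply Rabs_pos]) Hk).
  unfold norm_mu in A2. 
  assert (B : Rabs ((c k (t + h) - c k t) / h - D t k) < e / 2).
  { assert (pw k mu * Rabs ((c k (t + h) - c k t) / h - D t k) < pw k mu * (e / 2)) by lra.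
    apply Rmult_lt_reg_l in H; auto. }
  assert (e <= Rabs ((c k (t + h) - c k t) / h - D t k) + Rabs ((c k (t + h) - c k t) / h - coag_rhs a s r c k t)).
  { unfold e. replace (D t k - coag_rhs a s r c k t) with (- ((c k (t + h) - c k t) / h - D t k) + ((c k (t + h) - c k t) / h - coag_rhs a s r c k t)) by ring.
    eapply Rle_trans. apply Rabs_triang. rewrite Rabs_Ropp. lra. }
  replace (t + h) with (t + h) in A1 by ring. lra.
Qed.

Definition sgn (z : R) : R := if Rle_dec 0 z then 1 else -1.
Definition sig (b : bool) (x y : R) : R :=
  if Req_EM_T x 0 then (if b then sgn y else - sgn y) else sgn x.
Definition bh (h : R) : bool := if Rlt_dec 0 h then true else false.

Lemma sig_prop b x y : Rabs (sig b x y) <= 1 /\ sig b x y * x = Rabs x.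
Proof. unfold sig, sgn. destruct (Req_EM_T x 0) as [->|Hx].
  - rewrite Rabs_R0. destruct b, (Rle_dec 0 y); split; try (unfold Rabs; destruct Rcase_abs; lra); lra.
  - destruct (Rle_dec 0 x); split; unfold Rabs; repeat destruct Rcase_abs; lra. Qed.

Lemma sig_abs b x y : Rabs (sig b x y * y) <= Rabs y.
Proof. rewrite Rabs_mult. destruct (sig_prop b x y) as [H _]. assert (X := Rabs_pos y).
  assert (Y := Rabs_pos (sig b x y)). nra. Qed.

Lemma pk_eq x y h : h <> 0 -> (x <> 0 -> Rabs h * Rabs y < Rabs x) ->
  (Rabs (x + h * y) - Rabs x) / h = sig (bh h) x y * y.
Proof. intros Hh Hs. unfold sig, bh, sgn. destruct (Req_EM_T x 0) as [->|Hx].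
  - rewrite Rplus_0_l, Rabs_R0, Rminus_0_r, Rabs_mult.
    destruct (Rlt_dec 0 h), (Rle_dec 0 y).
    + rewrite (Rabs_pos_eq h), (Rabs_pos_eq y) by lra. field; auto.
    + rewrite (Rabs_pos_eq h), (Rabs_left y) by lra. field; auto.
    + rewrite (Rabs_left h), (Rabs_pos_eq y) by lra. field; auto.
    + rewrite (Rabs_left h), (Rabs_left y) by lra. field; auto.
  - specialize (Hs Hx). assert (Hz : Rabs (h * y) < Rabs x) by (rewrite Rabs_mult; auto).
    assert (Hz2 : - Rabs x < h * y < Rabs x) by (revert Hz; unfold Rabs at 1; destruct Rcase_abs; intros; lra). clear Hz.
    destruct (Rle_dec 0 x).
    + assert (0 < x) by lra. rewrite (Rabs_pos_eq x) in * by lra. rewrite (Rabs_pos_eq (x + h * y)) by lra. field; auto.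
    + rewrite (Rabs_left x) in * by lra. rewrite (Rabs_left (x + h * y)) by lra. field; auto.
Qed.

Lemma dini_finite (x y : nat -> R) K : exists del, 0 < del /\ forall h, h <> 0 -> Rabs h < del ->
  forall k, (1 <= k <= K)%nat -> (Rabs (x k + h * y k) - Rabs (x k)) / h = sig (bh h) (x k) (y k) * y k.
Proof. induction K.
  - exists 1. split; [lra|]. intros; lia.
  - destruct IHK as [d [Hd H]].
    set (dk := if Req_EM_T (x (S K)) 0 then 1 else Rabs (x (S K)) / (Rabs (y (S K)) + 1)).
    assert (Hdk : 0 < dk).
    { unfold dk. destruct Req_EM_T; [lra|]. apply Rdiv_lt_0_compat. apply Rabs_pos_lt; auto. assert (X:= Rabs_pos (y (S K))); lra. }
    exists (Rmin d dk). split. apply Rmin_glb_lt; auto.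
    intros h Hh Hhd k Hk. assert (H1 := Rmin_l d dk). assert (H2 := Rmin_r d dk).
    destruct (Nat.eq_dec k (S K)) as [->|Hne].
    + apply pk_eq; auto. intros Hx. assert (Edk : dk = Rabs (x (S K)) / (Rabs (y (S K)) + 1)) by (unfold dk; destruct Req_EM_T; [contradiction| reflexivity]).
      assert (Hy := Rabs_pos (y (S K))). assert (Hpos : 0 < Rabs (y (S K)) + 1) by lra.
      assert (H0 : Rabs h < Rabs (x (S K)) / (Rabs (y (S K)) + 1)) by lra.
      apply (Rmult_lt_compat_r (Rabs (y (S K)) + 1)) in H0; auto.
      unfold Rdiv in H0. rewrite Rmult_assoc, Rinv_l, Rmult_1_r in H0 by lra.
      assert (Hh0 := Rabs_pos h). nra.
    + apply H; auto; lra || lia.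
Qed.

Lemma qbound X x y h : h <> 0 ->
  (Rabs X - Rabs x) / h <= (Rabs (x + h * y) - Rabs x) / h + Rabs ((X - x) / h - y).
Proof. intros Hh.
  assert (E : (Rabs X - Rabs x) / h - (Rabs (x + h * y) - Rabs x) / h = (Rabs X - Rabs (x + h * y)) / h) by (field; auto).
  assert (B : Rabs ((Rabs X - Rabs (x + h * y)) / h) <= Rabs ((X - x) / h - y)).
  { unfold Rdiv. rewrite Rabs_mult. replace ((X - x) * / h - y) with ((X - (x + h * y)) * / h) by (field; auto).
    rewrite Rabs_mult. apply Rmult_le_compat_r. apply Rabs_pos. apply Rabs_triang_inv2. }
  apply abs_split in B. lra. Qed.

Lemma struct_limit a r (Astar alpha beta Rstar gamma mu : R) (cc dd sg : nat -> R) :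
  assumption_A a Astar alpha beta -> assumption_R r Rstar gamma alpha beta -> 1 <= mu ->
  (forall k, (1<=k)%nat -> 0 <= cc k) -> (forall k, (1<=k)%nat -> 0 <= dd k) ->
  summable1 (fun k => pw k mu * cc k) -> summable1 (fun k => pw k mu * dd k) ->
  summable1 (fun k => pw k (mu+beta) * (cc k + dd k)) ->
  (forall k, (1<=k)%nat -> Rabs (sg k) <= 1 /\ sg k * (cc k - dd k) = Rabs (cc k - dd k)) ->
  summable1 (fun k => pw k mu * sg k * yk a r cc dd k) ->
  Sum1 (fun k => pw k mu * sg k * yk a r cc dd k) <=
    (2 * Astar * (Cmu mu + 2) * Sum1 (fun l => pw l (mu+beta) * (cc l + dd l)) - Rstar)
      * Sum1 (fun k => pw k mu * Rabs (cc k - dd k)).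
Proof.
  intros HA HR Hmu Hc Hd Sc Sd SV Hsg Sy.
  set (N := Sum1 (fun k => pw k mu * Rabs (cc k - dd k))).
  set (V := Sum1 (fun l => pw l (mu+beta) * (cc l + dd l))).
  set (C := Astar * (mu * Rpower 2 (mu-1) + 3) * V * N).
  assert (SN : summable1 (fun k => pw k mu * Rabs (cc k - dd k))).
  { apply (summable_nonneg_cmp _ (fun k => pw k mu * cc k + pw k mu * dd k)).
    intros k Hk. assert (P := pw_pos k mu). specialize (Hc k Hk); specialize (Hd k Hk). split.
    apply Rmult_le_pos; [lra| apply Rabs_pos]. rewrite <- Rmult_plus_distr_l. apply Rmult_le_compat_l; [lra|].
    unfold Rabs; destruct (Rcase_abs (cc k - dd k)); lra.
    destruct Sc as [l1 H1], Sd as [l2 H2]. exists (l1 + l2). apply has_sum1_plus; auto. }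
  assert (H1 := proj1 (hs_iff _ _) (Sum1_spec _ Sy)).
  assert (H2 := proj1 (hs_iff _ _) (has_sum1_scal Rstar _ _ (Sum1_spec _ SN))).
  assert (Hc' : Un_cv (fun _ => C) C) by (intros e He; exists O; intros; unfold Rdist; rewrite Rminus_diag, Rabs_R0; auto).
  assert (H3 := CV_minus _ _ _ _ Hc' H2).
  assert (L : Sum1 (fun k => pw k mu * sg k * yk a r cc dd k) <= C - Rstar * N).
  { eapply Rle_cv_lim; [| exact H1 | exact H3]. intros n. simpl. rewrite sumR_scal.
    apply (struct_bound a r Astar alpha beta Rstar gamma mu cc dd sg n); auto. }
  assert (N0 : 0 <= N) by (apply Sum1_nonneg; auto; intros; apply Rmult_le_pos; [left; apply pw_pos| apply Rabs_pos]).
  assert (V0 : 0 <= V) by (apply Sum1_nonneg; auto; intros k Hk; apply Rmult_le_pos; [left; apply pw_pos| specialize (Hc k Hk); specialize (Hd k Hk); lra]).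
  assert (CB := Cmu_bound mu Hmu). destruct HA as [HA _].
  assert (Astar * (mu * Rpower 2 (mu-1) + 3) <= 2 * Astar * (Cmu mu + 2)) by nra.
  assert (Astar * (mu * Rpower 2 (mu-1) + 3) * (V * N) <= 2 * Astar * (Cmu mu + 2) * (V * N)) by (apply Rmult_le_compat_r; nra).
  unfold C in L. fold N V. nra.
Qed.

Lemma p_abs x y h : h <> 0 -> Rabs ((Rabs (x + h * y) - Rabs x) / h) <= Rabs y.
Proof. intros Hh. unfold Rdiv. rewrite Rabs_mult, Rabs_inv.
  assert (H := Rabs_triang_inv2 (x + h * y) x). replace (x + h * y - x) with (h * y) in H by ring.
  rewrite Rabs_mult in H. assert (Hp : 0 < Rabs h) by (apply Rabs_pos_lt; auto).
  apply (Rmult_le_reg_l (Rabs h)); auto. rewrite (Rmult_comm (Rabs (Rabs (x + h * y) - Rabs x))), <- Rmult_assoc, Rinv_r, Rmult_1_l by lra. lra. Qed.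

Theorem mainTheorem13 (a : nat -> nat -> R) (s r : nat -> R)
    (Astar alpha beta Rstar gamma : R)
    (cin din : nat -> R) (c d : nat -> R -> R) :
  assumption_A a Astar alpha beta ->
  assumption_R r Rstar gamma alpha beta ->
  assumption_S s ->
  in_l1 1 cin -> in_l1 1 din ->
  global_solution a s r cin c ->
  global_solution a s r din d ->
  forall mu, 1 <= mu -> forall t, 0 < t ->
    ddt_le (Ndist mu c d) t
      ((2 * Astar * (Cmu mu + 2)
          * Sum1 (fun l => pw l (mu + beta) * (c l t + d l t)) - Rstar)
       * Ndist mu c d t).
Proof.
  intros HA HR HS Hcin Hdin Hc Hd mu Hmu t Ht.
  assert (HA' := HA). destruct HA' as [HA0 [Hal [Hbe [Hab _]]]].
  destruct Hc as [Hc0 [Hcder [_ [HcC _]]]]. destruct Hd as [Hd0 [Hdder [_ [HdC _]]]].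
  destruct (HcC mu Hmu) as [Dc [Dc1 [Dc2 _]]]. destruct (HdC mu Hmu) as [Dd [Dd1 [Dd2 _]]].
  destruct (HcC (mu + beta) ltac:(lra)) as [Ec [Ec1 _]]. destruct (HdC (mu + beta) ltac:(lra)) as [Ed [Ed1 _]].
  assert (cpos : forall k, (1 <= k)%nat -> 0 <= c k t) by (intros k Hk; apply (proj1 (Hc0 k Hk)); lra).
  assert (dpos : forall k, (1 <= k)%nat -> 0 <= d k t) by (intros k Hk; apply (proj1 (Hd0 k Hk)); lra).
  assert (IDc := ident_D a s r c mu Dc t Ht Hcder Dc1 Dc2).
  assert (IDd := ident_D a s r d mu Dd t Ht Hdder Dd1 Dd2).
  set (x := fun k => c k t - d k t).
  set (y := fun k => Dc t k - Dd t k).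
  assert (Yk : forall k, (1 <= k)%nat -> y k = yk a r (fun k => c k t) (fun k => d k t) k).
  { intros k Hk. unfold y. rewrite IDc, IDd by auto. unfold coag_rhs, yk. cbv beta. ring. }
  destruct (Dc1 t Ht) as [Ac At]. destruct (Dd1 t Ht) as [Ad Bt].
  assert (Sy : abs_summ mu y).
  { eapply abs_summ_ext; [| exact (abs_summ_lin mu _ _ 1 (-1) At Bt)]. intros k Hk; unfold y; ring. }
  assert (Sc : summable1 (fun k => pw k mu * c k t)).
  { eapply summable_ext; [| exact Ac]. intros k Hk. simpl. rewrite Rabs_pos_eq; auto. }
  assert (Sd : summable1 (fun k => pw k mu * d k t)).
  { eapply summable_ext; [| exact Ad]. intros k Hk. simpl. rewrite Rabs_pos_eq; auto. }
  assert (SV : summable1 (fun k => pw k (mu + beta) * (c k t + d k t))).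
  { destruct (Ec1 t Ht) as [E1 _]. destruct (Ed1 t Ht) as [E2 _].
    eapply summable_ext; [| exact (abs_summ_lin _ _ _ 1 1 E1 E2)]. intros k Hk. simpl.
    specialize (cpos k Hk); specialize (dpos k Hk). rewrite Rabs_pos_eq; [ring| lra]. }
  set (B := (2 * Astar * (Cmu mu + 2) * Sum1 (fun l => pw l (mu + beta) * (c l t + d l t)) - Rstar) * Ndist mu c d t).
  assert (Sbound : forall b : bool, Sum1 (fun k => pw k mu * sig b (x k) (y k) * y k) <= B).
  { intros b. unfold B, Ndist.
    assert (Sg : summable1 (fun k => pw k mu * sig b (x k) (y k) * y k)).
    { apply (summable_abs_cmp _ (fun k => pw k mu * Rabs (y k))); auto. intros k Hk.
      rewrite Rmult_assoc, Rabs_mult, (Rabs_pos_eq (pw k mu)) by (left; apply pw_pos). apply Rmult_le_compat_l; [left; apply pw_pos| apply sig_abs]. }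
    assert (Sg2 : summable1 (fun k => pw k mu * sig b (x k) (y k) * yk a r (fun k => c k t) (fun k => d k t) k)).
    { apply (summable_ext (fun k => pw k mu * sig b (x k) (y k) * y k)); auto. intros k Hk; rewrite Yk; auto. }
    assert (SL := struct_limit a r Astar alpha beta Rstar gamma mu (fun k => c k t) (fun k => d k t) (fun k => sig b (x k) (y k))
       HA HR Hmu cpos dpos Sc Sd SV (fun k Hk => sig_prop b (x k) (y k)) Sg2).
    eapply Rle_trans; [| exact SL].
    right. apply Sum1_eq. apply (has_sum1_ext (fun k => pw k mu * sig b (x k) (y k) * yk a r (fun k => c k t) (fun k => d k t) k)).
    intros k Hk; rewrite Yk; auto. apply Sum1_spec; auto. }
  intros eps Heps.
  set (Y := Sum1 (fun k => pw k mu * Rabs (y k))).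
  assert (HY := Sum1_spec _ Sy). fold Y in HY.
  destruct (proj1 (hs_iff _ _) HY (eps/4) ltac:(lra)) as [K HK]. specialize (HK K (le_n K)). unfold Rdist in HK.
  destruct (dini_finite x y K) as [d0 [Hdl0 Hdini]].
  destruct (Dc2 t Ht (eps/4) ltac:(lra)) as [dc [Hdc Hqc]]. destruct (Dd2 t Ht (eps/4) ltac:(lra)) as [dd [Hdd Hqd]].
  exists (Rmin d0 (Rmin dc dd)). split. { repeat apply Rmin_glb_lt; auto. }
  intros h Hh Hhd Hth.
  assert (h0 : Rabs h < d0) by (assert (X := Rmin_l d0 (Rmin dc dd)); lra).
  assert (h1 : Rabs h < dc) by (assert (X := Rmin_r d0 (Rmin dc dd)); assert (X2 := Rmin_l dc dd); lra).
  assert (h2 : Rabs h < dd) by (assert (X := Rmin_r d0 (Rmin dc dd)); assert (X2 := Rmin_r dc dd); lra).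
  destruct (Dc1 (t+h) Hth) as [Ach _]. destruct (Dd1 (t+h) Hth) as [Adh _].
  assert (SQc := quot_summ mu c (Dc t) t h Hh Ach Ac At).
  assert (SQd := quot_summ mu d (Dd t) t h Hh Adh Ad Bt).
  specialize (Hqc h Hh h1 Hth). specialize (Hqd h Hh h2 Hth). unfold norm_mu in Hqc, Hqd.
  assert (SN1 : abs_summ mu (fun k => c k (t + h) - d k (t + h))).
  { eapply abs_summ_ext; [| exact (abs_summ_lin mu _ _ 1 (-1) Ach Adh)]. intros; cbv beta; ring. }
  assert (SN0 : abs_summ mu x).
  { eapply abs_summ_ext; [| exact (abs_summ_lin mu _ _ 1 (-1) Ac Ad)]. intros; unfold x; cbv beta. ring. }
  unfold abs_summ in SN1, SN0.
  set (p := fun k => (Rabs (x k + h * y k) - Rabs (x k)) / h).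
  assert (Sp : summable1 (fun k => pw k mu * p k)).
  { apply (summable_abs_cmp _ (fun k => pw k mu * Rabs (y k))); auto. intros k Hk.
    rewrite Rabs_mult, (Rabs_pos_eq (pw k mu)) by (left; apply pw_pos). apply Rmult_le_compat_l; [left; apply pw_pos| apply p_abs; auto]. }
  set (b := bh h).
  set (S := Sum1 (fun k => pw k mu * sig b (x k) (y k) * y k)).
  assert (SS : summable1 (fun k => pw k mu * sig b (x k) (y k) * y k)).
  { apply (summable_abs_cmp _ (fun k => pw k mu * Rabs (y k))); auto. intros k Hk.
    rewrite Rmult_assoc, Rabs_mult, (Rabs_pos_eq (pw k mu)) by (left; apply pw_pos). apply Rmult_le_compat_l; [left; apply pw_pos| apply sig_abs]. }
  assert (St1 : (Ndist mu c d (t + h) - Ndist mu c d t) / h <=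
     Sum1 (fun k => pw k mu * p k) + Sum1 (fun k => pw k mu * Rabs ((c k (t + h) - c k t) / h - Dc t k))
       + Sum1 (fun k => pw k mu * Rabs ((d k (t + h) - d k t) / h - Dd t k))).
  { unfold Ndist.
    assert (H1 := has_sum1_scal (/ h) _ _ (has_sum1_minus _ _ _ _ (Sum1_spec _ SN1) (Sum1_spec _ SN0))).
    assert (H2 := has_sum1_plus _ _ _ _ (has_sum1_plus _ _ _ _ (Sum1_spec _ Sp) (Sum1_spec _ SQc)) (Sum1_spec _ SQd)).
    replace ((Sum1 (fun k => pw k mu * Rabs (c k (t + h) - d k (t + h))) - Sum1 (fun k => pw k mu * Rabs (c k t - d k t))) / h)
      with (/ h * (Sum1 (fun k => pw k mu * Rabs (c k (t + h) - d k (t + h))) - Sum1 (fun k => pw k mu * Rabs (x k)))) by (unfold x, Rdiv; ring).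
    eapply has_sum1_le; [exact H1 | exact H2 |]. intros k Hk. simpl.
    assert (Q := qbound (c k (t + h) - d k (t + h)) (x k) (y k) h Hh).
    assert (E : (c k (t + h) - d k (t + h) - x k) / h - y k = ((c k (t + h) - c k t) / h - Dc t k) - ((d k (t + h) - d k t) / h - Dd t k))
      by (unfold x, y; field; auto).
    rewrite E in Q. assert (T := Rabs_triang ((c k (t + h) - c k t) / h - Dc t k) (- ((d k (t + h) - d k t) / h - Dd t k))).
    rewrite Rabs_Ropp in T. replace ((c k (t + h) - c k t) / h - Dc t k + - ((d k (t + h) - d k t) / h - Dd t k)) with ((c k (t + h) - c k t) / h - Dc t k - ((d k (t + h) - d k t) / h - Dd t k)) in T by ring.
    assert (Pk := pw_pos k mu). unfold p.
    replace (/ h * (pw k mu * Rabs (c k (t + h) - d k (t + h)) - pw k mu * Rabs (x k))) with (pw k mu * ((Rabs (c k (t + h) - d k (t + h)) - Rabs (x k)) / h)) by (field; auto).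
    rewrite <- !Rmult_plus_distr_l. apply Rmult_le_compat_l; [lra|]. lra. }
  assert (St2 : Sum1 (fun k => pw k mu * p k) - S <= eps / 2).
  { assert (H1 := has_sum1_minus _ _ _ _ (Sum1_spec _ Sp) (Sum1_spec _ SS)). fold S in H1.
    assert (H2 := has_sum1_tail K _ _ (has_sum1_scal 2 _ _ HY)). rewrite sumR_scal in H2.
    assert (H3 : has_sum1 (tailf K (fun k => pw k mu * p k - pw k mu * sig b (x k) (y k) * y k)) (Sum1 (fun k => pw k mu * p k) - S)).
    { eapply has_sum1_ext; [| exact H1]. intros k Hk. unfold tailf. destruct (Nat.leb_spec k K); auto.
      unfold p, b. rewrite Hdini by (auto; lia). ring. }
    assert (H4 := has_sum1_abs_le _ _ _ _ H3 H2).
    assert (Sum1 (fun k => pw k mu * p k) - S <= 2 * Y - 2 * sumR K (fun k => pw k mu * Rabs (y k))).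
    { eapply Rle_trans; [apply Rle_abs|]. apply H4. intros k Hk. unfold tailf. destruct (k <=? K)%nat.
      rewrite Rabs_R0; lra.
      assert (Pk := pw_pos k mu).
      replace (pw k mu * p k - pw k mu * sig b (x k) (y k) * y k) with (pw k mu * (p k - sig b (x k) (y k) * y k)) by ring.
      rewrite Rabs_mult, (Rabs_pos_eq (pw k mu)) by lra.
      assert (Rabs (p k - sig b (x k) (y k) * y k) <= 2 * Rabs (y k)).
      { eapply Rle_trans. apply Rabs_triang. rewrite Rabs_Ropp. assert (X1 := sig_abs b (x k) (y k)). assert (X2 := p_abs (x k) (y k) h Hh). fold (p k) in X2. lra. }
      assert (pw k mu * Rabs (p k - sig b (x k) (y k) * y k) <= pw k mu * (2 * Rabs (y k))) by (apply Rmult_le_compat_l; lra). lra. }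
    assert (HK' : Rabs (Y - sumR K (fun k => pw k mu * Rabs (y k))) < eps / 4) by (rewrite Rabs_minus_sym; exact HK).
    assert (XX := Rle_abs (Y - sumR K (fun k => pw k mu * Rabs (y k)))). lra. }
  assert (St3 := Sbound b). fold S in St3.
  lra.
Qed.
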